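(* Let $V$ be a finite set of voters, $A$ a finite set of alternatives, and $F:\mathcal{P}(V,A)\to 2^A\setminus\{\emptyset\}$ a social choice correspondence. The following two conditions are equivalent: (1) $F$ is onto with respect to singletons, is strategy-proof for optimists (SPO), and is strategy-proof for pessimists (SPP). (2) $F$ is onto with respect to singletons, and there exist, for each voter $i\in V$, functions $p_i:\mathcal{P}(V,A)\times A\times 2^A\to[0,1]$ such that (a) for every profile $P$ and every nonempty $X\subseteq A$, $\sum_{x\in X}p_i(P,x,X)=1$; (b) for every profile $P$, every nonempty $X\subseteq A$ and every $a\in X$, $p_i(P,a,X)>0$ whenever $a=\mathrm{best}(P_i,X)$ or $a=\mathrm{worst}(P_i,X)$, where $P_i$ is voter $i$'s ballot in $P$; (c) for every voter $i$, every profile $P=P_iP_{-i}$, every linear order $P_i'$ over $A$, and every utility function $u_i:A\to\mathbb{R}$ consistent with $P_i$ (i.e. $u_i(a)>u_i(b)$ whenever $a\succ_i b$ in $P_i$), $$\sum_{x\in F(P_iP_{-i})}p_i\big(P_iP_{-i},x,F(P_iP_{-i})\big)\,u_i(x)\;\geq\;\sum_{x\in F(P_i'P_{-i})}p_i\big(P_iP_{-i},x,F(P_i'P_{-i})\big)\,u_i(x).$$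
   Context: $V$ is a finite set of voters and $A$ a finite set of alternatives. A profile $P$ assigns to every voter $i\in V$ a linear order $P_i$ over $A$ (a ballot); $\succ_i$ denotes the strict order of $P_i$ and $\succeq_i$ its reflexive version. $\mathcal{P}(V,A)$ is the set of all profiles. $P_{-i}$ denotes the ballots of all voters other than $i$, so $P=P_iP_{-i}$, and $P_i'P_{-i}$ is the profile obtained from $P$ by replacing $P_i$ with the linear order $P_i'$. A social choice correspondence is a map $F:\mathcal{P}(V,A)\to 2^A\setminus\{\emptyset\}$. $F$ is onto with respect to singletons if for every $a\in A$ there is a profile $P$ with $F(P)=\{a\}$. For nonempty $W\subseteq A$, $\mathrm{best}(P_i,W)$ and $\mathrm{worst}(P_i,W)$ denote the $P_i$-best and $P_i$-worst elements of $W$. Define weak orders on nonempty subsets of $A$: $X\succeq_i^O Y$ iff $\mathrm{best}(P_i,X)\succeq_i\mathrm{best}(P_i,Y)$; $X\succeq_i^P Y$ iff $\mathrm{worst}(P_i,X)\succeq_i\mathrm{worst}(P_i,Y)$. $F$ is strategy-proof for optimists (SPO) if for every voter $i$, every profile $P_iP_{-i}$ and every linear order $P_i'$, $F(P_iP_{-i})\succeq_i^O F(P_i'P_{-i})$ (with $\succeq_i$ taken from the sincere ballot $P_i$). $F$ is strategy-proof for pessimists (SPP) if for every voter $i$, every profile $P_iP_{-i}$ and every linear order $P_i'$, $F(P_iP_{-i})\succeq_i^P F(P_i'P_{-i})$. *)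

(* Defs.v *)
From Stdlib Require Import Reals.
From mathcomp Require Import all_boot.
Set Implicit Arguments. Unset Strict Implicit. Unset Printing Implicit Defensive.

Section Voting.
Variables (V A : finType).

Definition strict_linorder (r : rel A) : Prop :=
  (forall x, ~~ r x x) /\
  (forall x y z, r x y -> r y z -> r x z) /\
  (forall x y, x != y -> r x y \/ r y x).

Definition ballot := {r : rel A | strict_linorder r}.

Definition succ (b : ballot) (x y : A) : bool := proj1_sig b x y.
Definition succeq (b : ballot) (x y : A) : bool := (x == y) || succ b x y.

Definition profile := V -> ballot.

Definition upd (P : profile) (i : V) (b : ballot) : profile :=
  fun j => if j == i then b else P j.

Definition is_best (b : ballot) (X : {set A}) (a : A) : Prop :=
  a \in X /\ forall y, y \in X -> succeq b a y.
Definition is_worst (b : ballot) (X : {set A}) (a : A) : Prop :=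
  a \in X /\ forall y, y \in X -> succeq b y a.

Definition SCC := profile -> {set A}.

Definition scc_nonempty (F : SCC) : Prop := forall P, F P != set0.

Definition onto_singletons (F : SCC) : Prop :=
  forall a : A, exists P, F P = [set a].

Definition optimist_geq (b : ballot) (X Y : {set A}) : Prop :=
  forall x y, is_best b X x -> is_best b Y y -> succeq b x y.
Definition pessimist_geq (b : ballot) (X Y : {set A}) : Prop :=
  forall x y, is_worst b X x -> is_worst b Y y -> succeq b x y.

Definition SPO (F : SCC) : Prop :=
  forall (i : V) (P : profile) (b' : ballot),
    optimist_geq (P i) (F P) (F (upd P i b')).
Definition SPP (F : SCC) : Prop :=
  forall (i : V) (P : profile) (b' : ballot),
    pessimist_geq (P i) (F P) (F (upd P i b')).

Definition consistent_utility (b : ballot) (u : A -> R) : Prop :=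
  forall x y, succ b x y -> Rgt (u x) (u y).

Definition exp_util (p : profile -> A -> {set A} -> R) (P : profile)
  (X : {set A}) (u : A -> R) : R :=
  \big[Rplus/R0]_(x in X) (Rmult (p P x X) (u x)).

Definition has_prob_representation (F : SCC) : Prop :=
  exists p : V -> profile -> A -> {set A} -> R,
    (forall i P x X, Rle 0 (p i P x X) /\ Rle (p i P x X) 1) /\
    (forall i P (X : {set A}), X != set0 ->
        \big[Rplus/R0]_(x in X) p i P x X = R1) /\
    (forall i P (X : {set A}) a, X != set0 -> a \in X ->
        (is_best (P i) X a \/ is_worst (P i) X a) -> Rgt (p i P a X) 0) /\
    (forall i P (b' : ballot) (u : A -> R), consistent_utility (P i) u ->
        Rge (exp_util (p i) P (F P) u) (exp_util (p i) P (F (upd P i b')) u)).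

End Voting.

(* Main.v *)
From HB Require Import structures.
Require Import Defs.
From Stdlib Require Import Reals Lra.
From mathcomp Require Import all_boot.
Set Implicit Arguments. Unset Strict Implicit. Unset Printing Implicit Defensive.

Lemma Rplus_assoc' : associative Rplus.
Proof. move=> x y z; by rewrite Rplus_assoc. Qed.
HB.instance Definition _ := Monoid.isComLaw.Build R R0 Rplus Rplus_assoc' Rplus_comm Rplus_0_l.

Section S.
Local Open Scope R_scope.
Variable T : finType.
Implicit Types (X : {set T}).

Lemma sum_le X (f g : T -> R) : (forall x, x \in X -> f x <= g x) ->
  \big[Rplus/R0]_(x in X) f x <= \big[Rplus/R0]_(x in X) g x.
Proof. move=> H; elim/big_rec2: _ => [|x a b Hx Hab]; first lra.
have := H x Hx; lra. Qed.

Lemma sum_mull X (f : T -> R) c :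
  \big[Rplus/R0]_(x in X) (c * f x) = c * \big[Rplus/R0]_(x in X) f x.
Proof. elim/big_rec2: _ => [|x a b Hx ->]; ring. Qed.

Lemma sum_ind X (q : pred T) (f : T -> R) a : a \in X ->
  (forall x, x \in X -> q x = (x == a)) ->
  \big[Rplus/R0]_(x in X) (if q x then f x else 0) = f a.
Proof.
move=> Ha Hq; rewrite (bigD1 a) //= Hq // eqxx big1 ?Rplus_0_r //.
by move=> x /andP[Hx Hxa]; rewrite Hq // (negbTE Hxa).
Qed.

Lemma sum_ge0 (P : pred T) (f : T -> R) : (forall x, P x -> 0 <= f x) ->
  0 <= \big[Rplus/R0]_(x | P x) f x.
Proof. move=> H; elim/big_rec: _ => [|x a Hx Ha]; first lra. have := H x Hx; lra. Qed.

Lemma sum_le0 (P : pred T) (f : T -> R) : (forall x, P x -> f x <= 0) ->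
  \big[Rplus/R0]_(x | P x) f x <= 0.
Proof. move=> H; elim/big_rec: _ => [|x a Hx Ha]; first lra. have := H x Hx; lra. Qed.

Lemma sum_split1 X (f : T -> R) a : a \in X ->
  \big[Rplus/R0]_(x in X) f x = f a + \big[Rplus/R0]_(x in X | x != a) f x.
Proof. move=> Ha; by rewrite (bigD1 a). Qed.
End S.

Section Vote.
Local Open Scope R_scope.
Variables (V A : finType).
Implicit Types (b : ballot A) (X : {set A}).

Lemma b_irr b x : ~~ succ b x x.
Proof. exact: (proj1 (proj2_sig b)). Qed.
Lemma b_trans b x y z : succ b x y -> succ b y z -> succ b x z.
Proof. exact: (proj1 (proj2 (proj2_sig b))). Qed.
Lemma b_tot b x y : x != y -> succ b x y \/ succ b y x.
Proof. exact: (proj2 (proj2 (proj2_sig b))). Qed.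

Lemma not_succeq b x y : succ b x y -> ~~ succeq b y x.
Proof.
move=> H; rewrite /succeq negb_or; apply/andP; split.
  by apply/eqP => E; move: H; rewrite E; move/negP: (b_irr b x).
by apply/negP => H'; move/negP: (b_irr b x); apply; exact: b_trans H H'.
Qed.
Lemma succeq_succ b x y z : succeq b x y -> succ b y z -> succ b x z.
Proof. by case/orP => [/eqP ->|H] // H'; exact: b_trans H H'. Qed.
Lemma succ_succeq b x y z : succ b x y -> succeq b y z -> succ b x z.
Proof. by move=> H /orP[/eqP <-|H'] //; exact: b_trans H H'. Qed.
Lemma succeq_refl b x : succeq b x x.
Proof. by rewrite /succeq eqxx. Qed.

Definition rk b z : nat := #|[pred w | succ b z w]|.

Lemma rk_lt b z w : succ b z w -> (rk b w < rk b z)%N.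
Proof.
move=> H; apply: proper_card; apply/properP; split.
  apply/subsetP => v; rewrite !inE => H'; exact: b_trans H H'.
by exists w; rewrite !inE //; apply: b_irr.
Qed.

Lemma rk_le b z : (rk b z <= #|A|)%N.
Proof. exact: max_card. Qed.

Lemma best_ex b X : X != set0 -> exists x, is_best b X x.
Proof.
case/set0Pn => x0 Hx0.
case: (arg_maxnP (rk b) Hx0) => x Hx Hmax.
exists x; split => // y Hy; rewrite /succeq.
case: eqVneq => //= Hne; case: (b_tot b Hne) => // H.
have Hle : (rk b y <= rk b x)%N := Hmax y Hy. by rewrite leqNgt (rk_lt H) in Hle.
Qed.

Lemma worst_ex b X : X != set0 -> exists x, is_worst b X x.
Proof.
case/set0Pn => x0 Hx0.
case: (arg_minnP (rk b) Hx0) => x Hx Hmin.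
exists x; split => // y Hy; rewrite /succeq.
case: eqVneq => //= Hne; case: (b_tot b Hne) => // H.
have Hle : (rk b x <= rk b y)%N := Hmin y Hy. by rewrite leqNgt (rk_lt H) in Hle.
Qed.

Lemma antisym b x y : succeq b x y -> succeq b y x -> x = y.
Proof.
move=> H1 H2; case: (eqVneq x y) => // Hne; exfalso.
move: H1; rewrite /succeq (negbTE Hne) /= => H3.
by move/negP: (not_succeq H3).
Qed.

Definition bestb b X x := (x \in X) && [forall y in X, succeq b x y].
Definition worstb b X x := (x \in X) && [forall y in X, succeq b y x].

Lemma bestbP b X x : reflect (is_best b X x) (bestb b X x).
Proof.
apply: (iffP andP).
  by case=> H1 /forall_inP H2; split.
by case=> H1 H2; split => //; apply/forall_inP.
Qed.
Lemma worstbP b X x : reflect (is_worst b X x) (worstb b X x).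
Proof.
apply: (iffP andP).
  by case=> H1 /forall_inP H2; split.
by case=> H1 H2; split => //; apply/forall_inP.
Qed.

Lemma bestb_eq b X x0 : is_best b X x0 -> forall x, x \in X -> bestb b X x = (x == x0).
Proof.
move=> H0 x Hx; apply/idP/eqP => [/bestbP H|->]; last exact/bestbP.
apply: antisym; [exact: (proj2 H) (proj1 H0)| exact: (proj2 H0) (proj1 H)].
Qed.
Lemma worstb_eq b X x0 : is_worst b X x0 -> forall x, x \in X -> worstb b X x = (x == x0).
Proof.
move=> H0 x Hx; apply/idP/eqP => [/worstbP H|->]; last exact/worstbP.
apply: antisym; [exact: (proj2 H0) (proj1 H)| exact: (proj2 H) (proj1 H0)].
Qed.

Definition pp b x X : R :=
  (if bestb b X x then / 2 else 0) + (if worstb b X x then / 2 else 0).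

Lemma pp_exp b X u xb xw : is_best b X xb -> is_worst b X xw ->
  \big[Rplus/R0]_(x in X) (pp b x X * u x) = u xb * / 2 + u xw * / 2.
Proof.
move=> Hb Hw.
rewrite (eq_bigr (fun x => (if bestb b X x then u x * / 2 else 0) +
   (if worstb b X x then u x * / 2 else 0))); last first.
  by move=> x _; rewrite /pp; case: (bestb _ _ _); case: (worstb _ _ _); ring.
rewrite big_split /=.
rewrite (sum_ind (fun x => u x * / 2) (proj1 Hb) (bestb_eq Hb)).
by rewrite (sum_ind (fun x => u x * / 2) (proj1 Hw) (worstb_eq Hw)).
Qed.

Lemma cons_ge b u x y : consistent_utility b u -> succeq b x y -> u x >= u y.
Proof. move=> Hu /orP[/eqP ->|H]; [lra| have := Hu _ _ H; lra]. Qed.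

End Vote.

Section Main.
Local Open Scope R_scope.
Variables (V A : finType) (F : SCC V A) (HF : scc_nonempty F).

Lemma dir12 : SPO F -> SPP F -> has_prob_representation F.
Proof.
move=> Ho Hp.
exists (fun i P x X => pp (P i) x X); split; [|split; [|split]].
- move=> i P x X; rewrite /pp; case: (bestb _ _ _); case: (worstb _ _ _); lra.
- move=> i P X HX.
  case: (best_ex (P i) HX) => xb Hb; case: (worst_ex (P i) HX) => xw Hw.
  have := pp_exp (fun _ => 1) Hb Hw.
  under eq_bigr do rewrite Rmult_1_r.
  move=> ->; lra.
- move=> i P X a HX Ha [H|H]; rewrite /pp.
  + rewrite (introT (bestbP _ _ _) H); case: (worstb _ _ _); lra.
  + rewrite (introT (worstbP _ _ _) H); case: (bestb _ _ _); lra.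
- move=> i P b' u Hu; rewrite /exp_util.
  set X := F P; set Y := F (upd P i b').
  case: (best_ex (P i) (HF P)) => xb Hb; case: (worst_ex (P i) (HF P)) => xw Hw.
  case: (best_ex (P i) (HF (upd P i b'))) => yb Hb'.
  case: (worst_ex (P i) (HF (upd P i b'))) => yw Hw'.
  rewrite (pp_exp u Hb Hw) (pp_exp u Hb' Hw').
  have := cons_ge Hu (Ho i P b' _ _ Hb Hb').
  have := cons_ge Hu (Hp i P b' _ _ Hw Hw').
  lra.
Qed.

Lemma dir21 : has_prob_representation F -> SPO F /\ SPP F.
Proof.
case=> p [Hp01 [Hsum [Hpos Hc]]].
set n := INR #|A|.
have n0 : 0 <= n by apply: pos_INR.
have rkn : forall (b : ballot A) (z : A), INR (rk b z) <= n.
  by move=> b z; rewrite /n; apply: le_INR; apply/leP; apply: rk_le.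
have rk0 : forall (b : ballot A) (z : A), 0 <= INR (rk b z) by move=> b z; apply: pos_INR.
have rklt : forall (b : ballot A) (z w : A), succ b z w -> INR (rk b w) < INR (rk b z).
  by move=> b z w H; apply: lt_INR; apply/ltP; apply: rk_lt.
split.
- move=> i P b' x y Hx Hy.
  set b := P i in Hx Hy *; set X := F P in Hx; set Y := F (upd P i b') in Hy.
  case: (eqVneq x y) => [->|Hne]; first exact: succeq_refl.
  case: (b_tot b Hne) => [H|H]; first by rewrite /succeq H orbT.
  exfalso.
  have Hpy : p i P y Y > 0 by apply: Hpos; [apply: HF|exact: (proj1 Hy)|left].
  set M := (n + 1) / p i P y Y.
  have HM : M * p i P y Y = n + 1 by rewrite /M; field; lra.
  have M0 : 0 <= M by rewrite /M; apply: Rmult_le_pos; [lra|left; apply: Rinv_0_lt_compat].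
  pose u z := INR (rk b z) + (if succeq b z y then M else 0).
  have Hu : consistent_utility b u.
    move=> z w Hzw; rewrite /u; have := rklt _ _ _ Hzw.
    case E1: (succeq b z y); case E2: (succeq b w y); try lra.
    by rewrite /succeq (succ_succeq Hzw E2) orbT in E1.
  have := Hc i P b' u Hu; rewrite /exp_util -/b -/X -/Y.
  have H1 : \big[Rplus/R0]_(x0 in X) (p i P x0 X * u x0) <= n.
    apply: Rle_trans (_ : \big[Rplus/R0]_(x0 in X) (n * p i P x0 X) <= _).
      apply: sum_le => z Hz; rewrite /u.
      have : ~~ succeq b z y by apply: not_succeq; apply: succ_succeq H (proj2 Hx z Hz).
      move/negbTE => ->; have := rkn b z; have := Hp01 i P z X; nra.
    rewrite sum_mull Hsum; [lra|exact: HF].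
  have H2 : \big[Rplus/R0]_(x0 in Y) (p i P x0 Y * u x0) >= n + 1.
    rewrite (sum_split1 _ (proj1 Hy)).
    have : 0 <= \big[Rplus/R0]_(x0 in Y | x0 != y) (p i P x0 Y * u x0).
      apply: sum_ge0 => z _; apply: Rmult_le_pos; first by case: (Hp01 i P z Y).
      rewrite /u; case: (succeq _ _ _); have := rk0 b z; lra.
    have : u y >= M by rewrite /u succeq_refl; have := rk0 b y; lra.
    nra.
  lra.
- move=> i P b' x y Hx Hy.
  set b := P i in Hx Hy *; set X := F P in Hx; set Y := F (upd P i b') in Hy.
  case: (eqVneq x y) => [->|Hne]; first exact: succeq_refl.
  case: (b_tot b Hne) => [H|H]; first by rewrite /succeq H orbT.
  exfalso.
  have Hpx : p i P x X > 0 by apply: Hpos; [apply: HF|exact: (proj1 Hx)|right].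
  set M := (n + 1) / p i P x X.
  have HM : M * p i P x X = n + 1 by rewrite /M; field; lra.
  have M0 : 0 <= M by rewrite /M; apply: Rmult_le_pos; [lra|left; apply: Rinv_0_lt_compat].
  pose u z := INR (rk b z) - n - (if succeq b x z then M else 0).
  have Hu : consistent_utility b u.
    move=> z w Hzw; rewrite /u; have := rklt _ _ _ Hzw.
    case E1: (succeq b x z); case E2: (succeq b x w); try lra.
    by rewrite /succeq (succeq_succ E1 Hzw) orbT in E2.
  have := Hc i P b' u Hu; rewrite /exp_util -/b -/X -/Y.
  have H1 : \big[Rplus/R0]_(x0 in Y) (p i P x0 Y * u x0) >= - n.
    apply: Rle_ge; apply: Rle_trans (_ : \big[Rplus/R0]_(x0 in Y) (- n * p i P x0 Y) <= _).
      rewrite sum_mull Hsum; [lra|exact: HF].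
    apply: sum_le => z Hz; rewrite /u.
    have : ~~ succeq b x z by apply: not_succeq; apply: succeq_succ (proj2 Hy z Hz) H.
    move/negbTE => ->; have := rk0 b z; have := Hp01 i P z Y; nra.
  have H2 : \big[Rplus/R0]_(x0 in X) (p i P x0 X * u x0) <= - (n + 1).
    rewrite (sum_split1 _ (proj1 Hx)).
    have : \big[Rplus/R0]_(x0 in X | x0 != x) (p i P x0 X * u x0) <= 0.
      apply: sum_le0 => z _; have := Hp01 i P z X.
      have : u z <= 0 by rewrite /u; case: (succeq _ _ _); have := rkn b z; lra.
      nra.
    have : u x <= - M by rewrite /u succeq_refl; have := rkn b x; lra.
    nra.
  lra.
Qed.
End Main.

Theorem mainTheorem1 (V A : finType) (F : SCC V A) (HF : scc_nonempty F) :
  (onto_singletons F /\ SPO F /\ SPP F) <->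
  (onto_singletons F /\ has_prob_representation F).
Proof.
split.
- by case=> Ho [Hs Hp]; split => //; apply: dir12.
- by case=> Ho Hr; split => //; apply: dir21.
Qed.
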